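(* Assume the setting below. Let $X'\in[\underline X,\overline X]$ be arbitrary, let $\bm w'=\arg\min_{\bm w\in\mathbb{R}^d}P_{X'}(\bm w)$, and let $\bm\alpha'$ be a maximizer of $D_{X'}$ over its feasible set $\mathcal{A}$. Define $$\Delta:=\max_{X''\in[\underline X,\overline X]}P_{X''}(\bm w')-\min_{X''\in[\underline X,\overline X]}D_{X''}(\bm\alpha'),$$ and $\mathcal{W}:=\{\bm w\in\mathbb{R}^d:\|\bm w-\bm w'\|_2\le\sqrt{2\Delta/\lambda}\}$. Then $\mathcal{W}\supseteq\mathcal{W}^*$, where $$\mathcal{W}^*:=\Bigl\{\arg\min_{\bm w\in\mathbb{R}^d}P_{X''}(\bm w)\ :\ X''\in[\underline X,\overline X]\Bigr\}.$$
   Context: Data: an output vector $\bm y=(y_1,\dots,y_n)\in\mathcal{Y}^n$ with $\mathcal{Y}\subseteq\mathbb{R}$, and two matrices $\underline X,\overline X\in\mathbb{R}^{n\times d}$ with $\underline X\le\overline X$ entrywise; $[\underline X,\overline X]$ denotes the set of all $X''\in\mathbb{R}^{n\times d}$ with $\underline{x_{ij}}\le x''_{ij}\le\overline{x_{ij}}$ for all $i,j$. For a matrix $X$, $\bm x_{i\cdot}$ denotes its $i$-th row and $\bm x_{\cdot j}$ its $j$-th column. Loss: $\ell:\mathcal{Y}\times\mathbb{R}\to\mathbb{R}_{\ge0}$, convex in its second argument. Penalty: $\rho:\mathbb{R}^d\to\mathbb{R}_{\ge 0}$, $\lambda$-strongly convex for some $\lambda>0$ (i.e. for all $\bm u,\bm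 v$ and $t\in[0,1]$, $\rho(t\bm u+(1-t)\bm v)\le t\rho(\bm u)+(1-t)\rho(\bm v)-\frac{\lambda}{2}t(1-t)\|\bm u-\bm v\|_2^2$) and decomposable, i.e. $\rho(\bm w)=\sum_{j=1}^d\rho_j(w_j)$ with each $\rho_j:\mathbb{R}\to\mathbb{R}$ convex. Primal objective: $P_X(\bm w):=\frac1n\sum_{i=1}^n\ell(y_i,\bm w^\top\bm x_{i\cdot})+\rho(\bm w)$. Convex conjugates: for $\phi:\mathbb{R}^k\to\mathbb{R}$, $\phi^*(\bm v):=\sup_{\bm u}\{\bm u^\top\bm v-\phi(\bm u)\}$; $\ell^*(y,\cdot)$ denotes the conjugate of $\ell(y,\cdot)$ in the second argument. Dual objective: $D_X(\bm\alpha):=-\frac1n\sum_{i=1}^n\ell^*(y_i,-\alpha_i)-\rho^*(\frac1n X^\top\bm\alpha)$, defined on the feasible set $\mathcal{A}:=\{\bm\alpha\in\mathbb{R}^n:\ell^*(y_i,-\alpha_i)<\infty\ \forall i\}$ (note $\rho^*$ is finite on all of $\mathbb{R}^d$ by strong convexity). Standing assumptions: the minimizers and maximizers referred to exist, and strong duality $\max_{\bm\alpha\in\mathcal{A}}D_X(\bm\alpha)=\min_{\bm w}P_X(\bm w)$ holds for every $X\in[\underline X,\overline X]$. *)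

(* Defs.v *)
From Stdlib Require Import Reals ClassicalEpsilon.
Open Scope R_scope.

(* Vectors in R^k are represented as functions nat -> R (only the first k
   coordinates matter); matrices in R^{n x d} as functions nat -> nat -> R. *)

Fixpoint rsum (k : nat) (f : nat -> R) : R :=
  match k with O => 0 | S m => rsum m f + f m end.

Definition dot (d : nat) (u v : nat -> R) : R := rsum d (fun j => u j * v j).
Definition norm2 (d : nat) (u : nat -> R) : R := sqrt (rsum d (fun j => u j ^ 2)).

(* least upper bound of a set of reals (meaningful when it exists) *)
Definition sup_R (S : R -> Prop) : R := epsilon (inhabits 0) (fun c => is_lub S c).

Definition conj1 (f : R -> R) (v : R) : R := sup_R (fun r => exists u, r = u * v - f u).
Definition conj1_finite (f : R -> R) (v : R) : Prop := bound (fun r => exists u, r = u * v - f u).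
Definition conjd (d : nat) (f : (nat -> R) -> R) (v : nat -> R) : R :=
  sup_R (fun r => exists u, r = dot d u v - f u).

Definition in_box (n d : nat) (Xlo Xhi X : nat -> nat -> R) : Prop :=
  forall i j, (i < n)%nat -> (j < d)%nat -> Xlo i j <= X i j <= Xhi i j.

Definition row (X : nat -> nat -> R) (i : nat) : nat -> R := fun j => X i j.

Definition Pobj (n d : nat) (l : R -> R -> R) (rho : (nat -> R) -> R)
  (y : nat -> R) (X : nat -> nat -> R) (w : nat -> R) : R :=
  / INR n * rsum n (fun i => l (y i) (dot d w (row X i))) + rho w.

Definition Dobj (n d : nat) (l : R -> R -> R) (rho : (nat -> R) -> R)
  (y : nat -> R) (X : nat -> nat -> R) (alpha : nat -> R) : R :=
  - (/ INR n * rsum n (fun i => conj1 (l (y i)) (- alpha i)))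
  - conjd d rho (fun j => / INR n * rsum n (fun i => X i j * alpha i)).

Definition feasible (n : nat) (l : R -> R -> R) (y : nat -> R) (alpha : nat -> R) : Prop :=
  forall i, (i < n)%nat -> conj1_finite (l (y i)) (- alpha i).

Definition convex1 (f : R -> R) : Prop :=
  forall u v t, 0 <= t <= 1 -> f (t * u + (1 - t) * v) <= t * f u + (1 - t) * f v.

Definition strongly_convex (d : nat) (lam : R) (rho : (nat -> R) -> R) : Prop :=
  forall u v t, 0 <= t <= 1 ->
    rho (fun j => t * u j + (1 - t) * v j)
    <= t * rho u + (1 - t) * rho v - lam / 2 * t * (1 - t) * (norm2 d (fun j => u j - v j)) ^ 2.

Definition is_minimizer (P : (nat -> R) -> R) (w : nat -> R) : Prop :=
  forall w2, P w <= P w2.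

Definition is_dual_maximizer (n : nat) (l : R -> R -> R) (y : nat -> R)
  (D : (nat -> R) -> R) (alpha : nat -> R) : Prop :=
  feasible n l y alpha /\ forall alpha2, feasible n l y alpha2 -> D alpha2 <= D alpha.

(* Main.v *)
Require Import Defs.
From Stdlib Require Import Reals Lra Psatz.
Open Scope R_scope.

Lemma rsum_ext k f g : (forall i, (i < k)%nat -> f i = g i) -> rsum k f = rsum k g.
Proof. induction k; simpl; intros H; [reflexivity|]. rewrite IHk by (intros; apply H; lia).
  rewrite H by lia; reflexivity. Qed.

Lemma rsum_le k f g : (forall i, (i < k)%nat -> f i <= g i) -> rsum k f <= rsum k g.
Proof. induction k; simpl; intros H; [lra|]. assert (f k <= g k) by (apply H; lia).
  assert (rsum k f <= rsum k g) by (apply IHk; intros; apply H; lia). lra. Qed.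

Lemma rsum_lin k a b f g : rsum k (fun i => a * f i + b * g i) = a * rsum k f + b * rsum k g.
Proof. induction k; simpl; [ring|]. rewrite IHk; ring. Qed.

Lemma rsum_nonneg k f : (forall i, (i < k)%nat -> 0 <= f i) -> 0 <= rsum k f.
Proof. induction k; simpl; intros H; [lra|]. assert (0 <= f k) by (apply H; lia).
  assert (0 <= rsum k f) by (apply IHk; intros; apply H; lia). lra. Qed.

Theorem theorem1
  (n d : nat) (Y : R -> Prop) (y : nat -> R) (Xlo Xhi : nat -> nat -> R)
  (l : R -> R -> R) (rho : (nat -> R) -> R) (rhoj : nat -> R -> R) (lam : R)
  (Hy : forall i, (i < n)%nat -> Y (y i))
  (Hbox : forall i j, (i < n)%nat -> (j < d)%nat -> Xlo i j <= Xhi i j)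
  (Hl_nonneg : forall a b, Y a -> 0 <= l a b)
  (Hl_convex : forall a, Y a -> convex1 (l a))
  (Hlam : 0 < lam)
  (Hrho_nonneg : forall w, 0 <= rho w)
  (Hrho_sc : strongly_convex d lam rho)
  (Hrho_dec : forall w, rho w = rsum d (fun j => rhoj j (w j)))
  (Hrhoj_convex : forall j, (j < d)%nat -> convex1 (rhoj j))
  (Hduality : forall X, in_box n d Xlo Xhi X ->
     exists alpha w,
       is_dual_maximizer n l y (Dobj n d l rho y X) alpha /\
       is_minimizer (Pobj n d l rho y X) w /\
       Dobj n d l rho y X alpha = Pobj n d l rho y X w)
  (X' : nat -> nat -> R) (HX' : in_box n d Xlo Xhi X')
  (w' : nat -> R) (Hw' : is_minimizer (Pobj n d l rho y X') w')
  (alpha' : nat -> R) (Halpha' : is_dual_maximizer n l y (Dobj n d l rho y X') alpha')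
  (Pmax Dmin : R)
  (HPmax : (exists X, in_box n d Xlo Xhi X /\ Pobj n d l rho y X w' = Pmax) /\
           forall X, in_box n d Xlo Xhi X -> Pobj n d l rho y X w' <= Pmax)
  (HDmin : (exists X, in_box n d Xlo Xhi X /\ Dobj n d l rho y X alpha' = Dmin) /\
           forall X, in_box n d Xlo Xhi X -> Dmin <= Dobj n d l rho y X alpha') :
  forall X'' w'', in_box n d Xlo Xhi X'' ->
    is_minimizer (Pobj n d l rho y X'') w'' ->
    norm2 d (fun j => w'' j - w' j) <= sqrt (2 * (Pmax - Dmin) / lam).
Proof.
  intros X'' w'' HX'' Hw''.
  destruct (Hduality X'' HX'') as [alpha [w [[_ Hamax] [Hwmin Heq]]]].
  assert (HD : Dobj n d l rho y X'' alpha' <= Pobj n d l rho y X'' w'').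
  { destruct Halpha' as [Hf _]. specialize (Hamax alpha' Hf). specialize (Hwmin w''). lra. }
  assert (HP1 := proj2 HPmax X'' HX''). assert (HD1 := proj2 HDmin X'' HX'').
  set (S := rsum d (fun j => (w'' j - w' j) ^ 2)).
  assert (HS0 : 0 <= S) by (apply rsum_nonneg; intros; apply pow2_ge_0).
  assert (HNS : norm2 d (fun j => w' j - w'' j) = sqrt S).
  { unfold norm2, S. f_equal. apply rsum_ext. intros; ring. }
  assert (HN2 : (sqrt S) ^ 2 = S) by (simpl; rewrite Rmult_1_r; apply sqrt_sqrt; lra).
  set (A := Pobj n d l rho y X'' w' - Pobj n d l rho y X'' w'').
  assert (Hinv : 0 <= / INR n).
  { destruct n. simpl. rewrite Rinv_0. lra. apply Rlt_le, Rinv_0_lt_compat, lt_0_INR; lia. }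
  assert (Hkey : forall t, 0 < t <= 1 -> lam / 2 * (1 - t) * S <= A).
  { intros t Ht.
    set (m := fun j => t * w' j + (1 - t) * w'' j).
    assert (Hm : Pobj n d l rho y X'' m <= t * Pobj n d l rho y X'' w' + (1 - t) * Pobj n d l rho y X'' w''
                 - lam / 2 * t * (1 - t) * S).
    { unfold Pobj.
      assert (Hr := Hrho_sc w' w'' t ltac:(lra)). fold m in Hr. rewrite HNS, HN2 in Hr.
      assert (Hl : rsum n (fun i => l (y i) (dot d m (row X'' i))) <=
                   t * rsum n (fun i => l (y i) (dot d w' (row X'' i))) +
                   (1 - t) * rsum n (fun i => l (y i) (dot d w'' (row X'' i)))).
      { rewrite <- rsum_lin. apply rsum_le. intros i Hi.
        assert (Hdot : dot d m (row X'' i) = t * dot d w' (row X'' i) + (1 - t) * dot d w'' (row X'' i)).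
        { unfold dot. rewrite <- rsum_lin. apply rsum_ext. intros; unfold m; ring. }
        rewrite Hdot. apply (Hl_convex _ (Hy i Hi)). lra. }
      apply Rmult_le_compat_l with (r := / INR n) in Hl; [|exact Hinv].
      nra. }
    specialize (Hw'' m).
    unfold A. nra. }
  assert (HA : lam / 2 * S <= A).
  { destruct (Rle_dec (lam / 2 * S) A) as [h|h]; [exact h|].
    exfalso. apply Rnot_le_lt in h.
    assert (HA0 : 0 <= A) by (unfold A; specialize (Hw'' w'); lra).
    clearbody A.
    assert (Hc : 0 < lam / 2 * S) by lra.
    set (t := (A - lam / 2 * S) / (- (2 * (lam / 2 * S)))).
    assert (Hte0 : t * (2 * (lam / 2 * S)) = lam / 2 * S - A) by (unfold t; field; assert (0 < S) by nra; split; apply Rgt_not_eq; lra).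
    clearbody t.
    assert (Ht : 0 < t <= 1).
    { split.
      - apply Rmult_lt_reg_r with (2 * (lam / 2 * S)); lra.
      - apply Rmult_le_reg_r with (2 * (lam / 2 * S)); lra. }
    specialize (Hkey t Ht).
    assert (lam / 2 * (1 - t) * S = lam / 2 * S - t * (lam / 2 * S)) by ring.
    lra. }
  assert (Hsym : norm2 d (fun j => w'' j - w' j) = sqrt S) by reflexivity.
  rewrite Hsym. apply sqrt_le_1_alt.
  apply Rmult_le_reg_l with (lam / 2); [lra|].
  replace (lam / 2 * (2 * (Pmax - Dmin) / lam)) with (Pmax - Dmin) by (field; lra).
  unfold A in HA. lra.
Qed.
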